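(* The derivative test $\mathcal{D}$ is reasonable and error-free.
   Context: Let $\Omega=\{0,1\}$ and let $\Omega^\infty$ be the set of infinite sequences $\omega=(\omega_1,\omega_2,\dots)$; $\omega^t=(\omega_1,\dots,\omega_t)$ denotes the prefix and also the cylinder set $\{\hat\omega:\hat\omega^t=\omega^t\}$; $\Omega^\infty$ carries the $\sigma$-algebra generated by cylinders. $\Delta(\Omega)$ is the set of probability distributions on $\Omega$. A forecasting strategy is a function $f:\bigcup_{t\ge 0}(\Omega\times\Delta(\Omega)\times\Delta(\Omega))^t\to\Delta(\Omega)$; $F$ is the set of all forecasting strategies. For $f=(f_0,f_1)$ and $\omega$, the play path $h=h(\omega,f_0,f_1)$ is defined by $h^0=\emptyset$, $h^t=(h^{t-1},(\omega_t,f_0(h^{t-1}),f_1(h^{t-1})))$. The induced measures satisfy $P_i^f(\omega^t)=\prod_{n=1}^t f_i(h^{n-1})[\omega_n]$, $i\in\{0,1\}$. A comparison test is a function $T:\Omega^\infty\times F\times F\to\{0,\tfrac12,1\}$, measurable in $\omega$ for each fixed pair; write $\{T(\cdot,f)=k\}=\{\omega:T(\omega,f_0,f_1)=k\}$. $T$ is error-free if for all $f$ and $i\in\{0,1\}$, $P_{1-i}^f(\{T(\cdot,f)=i\})=0$. $T$ is reasonable if for all $f$, $i\in\{0,1\}$ and measurable $A$: $P_i^f(A)>0$ and $P_{1-i}^f(A)=0$ imply $P_i^f(A\cap\{T(\cdot,f)=i\})>0$. Likelihood ratios (all along the play path $h=h(\omega,f_0,f_1)$): $D^t_{f_0}f_1(\omega)=\prod_{n=1}^t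 \frac{f_1(h^{n-1})[\omega_n]}{f_0(h^{n-1})[\omega_n]}$ and $D^t_{f_1}f_0(\omega)=\prod_{n=1}^t \frac{f_0(h^{n-1})[\omega_n]}{f_1(h^{n-1})[\omega_n]}$. For $(j,k)\in\{(0,1),(1,0)\}$, $\overline{D}_{f_j}f_k(\omega)=\limsup_t D^t_{f_j}f_k(\omega)$ and $\underline{D}_{f_j}f_k(\omega)=\liminf_t D^t_{f_j}f_k(\omega)$ if $f_j(h^{n-1})[\omega_n]>0$ for all $n$, and both equal $+\infty$ otherwise; if they coincide and are finite, the common value is the derivative $D_{f_j}f_k(\omega)$. The derivative test is $\mathcal{D}(\omega,f_0,f_1)=1$ if $D_{f_1}f_0(\omega)$ exists and equals $0$; $=0$ if $D_{f_0}f_1(\omega)$ exists and equals $0$; and $=\tfrac12$ otherwise. *)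

(* Defs.v *)
From Stdlib Require Import Reals List ClassicalDescription.
Import ListNotations.
Open Scope R_scope.

(* Omega = {0,1} is bool (false = 0, true = 1).
   An infinite sequence omega = (omega_1, omega_2, ...) is  w : nat -> bool
   with  w k = omega_{k+1}. *)
Definition seqw := nat -> bool.

(* Delta(Omega): a distribution on {0,1}, given by the probability of 1. *)
Record Dist := mkDist { dp : R ; dp_nonneg : 0 <= dp ; dp_le1 : dp <= 1 }.

Definition dprob (q : Dist) (x : bool) : R := if x then dp q else 1 - dp q.

(* Finite histories in (Omega x Delta x Delta)^t, oldest entry first. *)
Definition history := list (bool * Dist * Dist).

Definition strategy := history -> Dist.

Fixpoint hist (f0 f1 : strategy) (w : seqw) (t : nat) : history :=
  match t with
  | O => []
  | S t' => hist f0 f1 w t' ++ [(w t', f0 (hist f0 f1 w t'), f1 (hist f0 f1 w t'))]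
  end.

Definition sel (i : bool) (f0 f1 : strategy) : strategy := if i then f1 else f0.

(* f_i(h^{n-1})[omega_n] for n = k+1 *)
Definition fac (i : bool) (f0 f1 : strategy) (w : seqw) (k : nat) : R :=
  dprob (sel i f0 f1 (hist f0 f1 w k)) (w k).

Fixpoint prodn (g : nat -> R) (t : nat) : R :=
  match t with O => 1 | S t' => prodn g t' * g t' end.

Definition in_cyl (s : list bool) (w : seqw) : Prop :=
  forall k, (k < length s)%nat -> w k = nth k s false.

Definition word_seq (s : list bool) : seqw := fun k => nth k s false.

(* P_i^f(omega^t) = prod_{n=1}^t f_i(h^{n-1})[omega_n]  (h depends on w
   only through the prefix, so we evaluate along any extension). *)
Definition cylmass (i : bool) (f0 f1 : strategy) (s : list bool) : R :=
  prodn (fac i f0 f1 (word_seq s)) (length s).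

Inductive measurable : (seqw -> Prop) -> Prop :=
  | meas_cyl : forall s, measurable (in_cyl s)
  | meas_compl : forall A, measurable A -> measurable (fun w => ~ A w)
  | meas_union : forall A : nat -> seqw -> Prop,
      (forall n, measurable (A n)) -> measurable (fun w => exists n, A n w)
  | meas_ext : forall A B, (forall w, A w <-> B w) -> measurable A -> measurable B.

(* The measure P_i^f is the (Caratheodory) extension of the cylinder masses;
   its value on a set A is the infimum of  sum_n P(c_n)  over countable covers
   of A by cylinders.  We only need the two statements "P(A) = 0" and
   "P(A) > 0" about this infimum. *)
Definition covers (A : seqw -> Prop) (c : nat -> list bool) : Prop :=
  forall w, A w -> exists n, in_cyl (c n) w.

Definition psum (i : bool) (f0 f1 : strategy) (c : nat -> list bool) (N : nat) : R :=
  sum_f_R0 (fun n => cylmass i f0 f1 (c n)) N.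

Definition prob_zero (i : bool) (f0 f1 : strategy) (A : seqw -> Prop) : Prop :=
  forall eps, 0 < eps ->
    exists c, covers A c /\ forall N, psum i f0 f1 c N <= eps.

Definition prob_pos (i : bool) (f0 f1 : strategy) (A : seqw -> Prop) : Prop :=
  exists r, 0 < r /\
    forall c, covers A c -> exists N, r <= psum i f0 f1 c N.

(* Comparison tests take values in {0, 1/2, 1} (coded as reals). *)
Definition test := seqw -> strategy -> strategy -> R.

Definition bval (i : bool) : R := if i then 1 else 0.

Definition error_free (T : test) : Prop :=
  forall (f0 f1 : strategy) (i : bool),
    prob_zero (negb i) f0 f1 (fun w => T w f0 f1 = bval i).

Definition reasonable (T : test) : Prop :=
  forall (f0 f1 : strategy) (i : bool) (A : seqw -> Prop),
    measurable A ->
    prob_pos i f0 f1 A -> prob_zero (negb i) f0 f1 A ->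
    prob_pos i f0 f1 (fun w => A w /\ T w f0 f1 = bval i).

Definition lratio (j k : bool) (f0 f1 : strategy) (w : seqw) (t : nat) : R :=
  prodn (fun n => fac k f0 f1 w n / fac j f0 f1 w n) t.

(* The derivative D_{f_j} f_k (w) exists and equals L: all denominators are
   positive (otherwise limsup = liminf = +oo) and limsup = liminf = L finite,
   i.e. the ratio sequence converges to L. *)
Definition deriv_is (j k : bool) (f0 f1 : strategy) (w : seqw) (L : R) : Prop :=
  (forall n, 0 < fac j f0 f1 w n) /\ Un_cv (lratio j k f0 f1 w) L.

Definition dtest : test := fun w f0 f1 =>
  if excluded_middle_informative (deriv_is true false f0 f1 w 0) then 1
  else if excluded_middle_informative (deriv_is false true f0 f1 w 0) then 0
  else / 2.

(* Main.v *)
Require Import Defs.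
From Stdlib Require Import Reals Lra Lia List ClassicalDescription ClassicalEpsilon Classical Cantor.
Import ListNotations.
Open Scope R_scope.

Lemma hist_local f0 f1 w v t : (forall k, (k < t)%nat -> w k = v k) ->
  hist f0 f1 w t = hist f0 f1 v t.
Proof.
  induction t; intros H; simpl; auto.
  rewrite IHt by (intros; apply H; lia). rewrite H by lia. reflexivity.
Qed.

Lemma fac_local i f0 f1 w v k : (forall m, (m <= k)%nat -> w m = v m) ->
  fac i f0 f1 w k = fac i f0 f1 v k.
Proof.
  intros H. unfold fac. rewrite (hist_local f0 f1 w v k) by (intros; apply H; lia).
  rewrite H by lia. reflexivity.
Qed.

Lemma prodn_ext g g' t : (forall k, (k < t)%nat -> g k = g' k) -> prodn g t = prodn g' t.
Proof. induction t; intros H; simpl; auto. rewrite IHt by (intros; apply H; lia). rewrite H by lia. auto. Qed.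

Lemma dprob_nonneg q b : 0 <= dprob q b.
Proof. destruct q; unfold dprob; destruct b; simpl; lra. Qed.

Lemma fac_nonneg i f0 f1 w k : 0 <= fac i f0 f1 w k.
Proof. apply dprob_nonneg. Qed.

Lemma prodn_nonneg g t : (forall k, 0 <= g k) -> 0 <= prodn g t.
Proof. intros H; induction t; simpl; try lra. apply Rmult_le_pos; auto. Qed.

Lemma cylmass_nonneg i f0 f1 s : 0 <= cylmass i f0 f1 s.
Proof. apply prodn_nonneg. intros; apply fac_nonneg. Qed.

Definition pref (w : seqw) (t : nat) : list bool := map w (seq 0 t).

Lemma pref_length w t : length (pref w t) = t.
Proof. unfold pref. rewrite length_map, length_seq. auto. Qed.

Lemma pref_nth w t k : (k < t)%nat -> nth k (pref w t) false = w k.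
Proof. intros H. unfold pref. rewrite nth_indep with (d' := w 0%nat) by (rewrite length_map, length_seq; auto).
  rewrite map_nth, seq_nth; auto. Qed.

Lemma in_cyl_pref w t : in_cyl (pref w t) w.
Proof. intros k Hk. rewrite pref_length in Hk. rewrite pref_nth; auto. Qed.

Lemma cylmass_pref i f0 f1 w t : cylmass i f0 f1 (pref w t) = prodn (fac i f0 f1 w) t.
Proof.
  unfold cylmass. rewrite pref_length. apply prodn_ext. intros k Hk.
  apply fac_local. intros m Hm. unfold word_seq. apply pref_nth. lia.
Qed.

Lemma cylmass_snoc i f0 f1 s b : cylmass i f0 f1 (s ++ [b]) =
  cylmass i f0 f1 s * dprob (sel i f0 f1 (hist f0 f1 (word_seq s) (length s))) b.
Proof.
  unfold cylmass. rewrite length_app. simpl length. rewrite Nat.add_1_r. simpl prodn.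
  f_equal.
  - apply prodn_ext. intros k Hk. apply fac_local. intros m Hm. unfold word_seq.
    rewrite app_nth1 by lia. auto.
  - unfold fac. rewrite (hist_local f0 f1 (word_seq (s ++ [b])) (word_seq s)).
    + unfold word_seq at 2. rewrite app_nth2 by lia. rewrite Nat.sub_diag. auto.
    + intros k Hk. unfold word_seq. rewrite app_nth1 by lia. auto.
Qed.

Lemma cylmass_split i f0 f1 s : cylmass i f0 f1 (s ++ [false]) + cylmass i f0 f1 (s ++ [true]) = cylmass i f0 f1 s.
Proof. rewrite !cylmass_snoc. unfold dprob. ring. Qed.

Lemma cylmass_nil i f0 f1 : cylmass i f0 f1 [] = 1.
Proof. reflexivity. Qed.
Definition ind (P : Prop) (x : R) : R := if excluded_middle_informative P then x else 0.

Lemma ind_T (P : Prop) x : P -> ind P x = x.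
Proof. intros H; unfold ind; destruct excluded_middle_informative; tauto. Qed.
Lemma ind_F (P : Prop) x : ~ P -> ind P x = 0.
Proof. intros H; unfold ind; destruct excluded_middle_informative; tauto. Qed.
Lemma ind_nonneg P x : 0 <= x -> 0 <= ind P x.
Proof. intros; unfold ind; destruct excluded_middle_informative; lra. Qed.
Lemma ind_le P x : 0 <= x -> ind P x <= x.
Proof. intros; unfold ind; destruct excluded_middle_informative; lra. Qed.

Lemma sum_nonneg (a : nat -> R) N : (forall n, (n <= N)%nat -> 0 <= a n) -> 0 <= sum_f_R0 a N.
Proof. induction N; intros H; simpl. apply H; lia. apply Rplus_le_le_0_compat; [apply IHN; intros; apply H; lia| apply H; lia]. Qed.

Lemma sum_zero (a : nat -> R) N : (forall n, (n <= N)%nat -> a n = 0) -> sum_f_R0 a N = 0.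
Proof. induction N; intros H; simpl. apply H; lia. rewrite IHN by (intros; apply H; lia). rewrite H by lia. ring. Qed.

Lemma sum_mono (a : nat -> R) N M : (forall n, 0 <= a n) -> (N <= M)%nat -> sum_f_R0 a N <= sum_f_R0 a M.
Proof. intros H HNM. induction HNM. lra. simpl. specialize (H (S m)). lra. Qed.

Lemma sum_sel (a : nat -> R) k0 K : (k0 <= K)%nat -> sum_f_R0 (fun k => ind (k0 = k) (a k)) K = a k0.
Proof.
  induction K; intros H; simpl.
  - assert (k0 = 0%nat) by lia. subst. apply ind_T; auto.
  - destruct (Nat.eq_dec k0 (S K)).
    + subst. rewrite sum_zero. rewrite ind_T; auto. ring. intros n Hn. apply ind_F. lia.
    + rewrite IHK by lia. rewrite ind_F by auto. ring.
Qed.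

Lemma sum_swap (a : nat -> nat -> R) N K :
  sum_f_R0 (fun n => sum_f_R0 (fun k => a n k) K) N = sum_f_R0 (fun k => sum_f_R0 (fun n => a n k) N) K.
Proof.
  induction N; simpl. auto.
  rewrite IHN. rewrite <- plus_sum. apply sum_eq. intros; simpl; auto.
Qed.

Lemma sum_count (R0 : nat -> Prop) x N : 0 <= x ->
  (forall n m, (n <= N)%nat -> (m <= N)%nat -> R0 n -> R0 m -> n = m) ->
  sum_f_R0 (fun n => ind (R0 n) x) N <= x.
Proof.
  intros Hx. induction N; intros H; simpl.
  - apply ind_le; auto.
  - destruct (classic (R0 (S N))).
    + rewrite sum_zero. rewrite ind_T; auto. lra. intros n Hn. apply ind_F. intro Hr. assert (n = S N) by (apply H; auto; lia). lia.
    + rewrite ind_F by auto. rewrite Rplus_0_r. apply IHN. intros; apply H; auto; lia.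
Qed.

Lemma sum_reindex (h : nat -> R) (Q : nat -> Prop) (sig : nat -> nat) N M :
  (forall j, 0 <= h j) ->
  (forall n, (n <= N)%nat -> Q n -> (sig n <= M)%nat) ->
  (forall n m, (n <= N)%nat -> (m <= N)%nat -> Q n -> Q m -> sig n = sig m -> n = m) ->
  sum_f_R0 (fun n => ind (Q n) (h (sig n))) N <= sum_f_R0 h M.
Proof.
  intros Hh HM Hinj.
  rewrite (sum_eq _ (fun n => sum_f_R0 (fun j => ind (Q n /\ sig n = j) (h j)) M)).
  - rewrite sum_swap. apply sum_Rle. intros j Hj.
    apply sum_count; auto. intros n m Hn Hm [Qn En] [Qm Em]. apply Hinj; auto; congruence.
  - intros n Hn. destruct (classic (Q n)).
    + rewrite ind_T by auto. rewrite <- (sum_sel h (sig n) M) by auto.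
      apply sum_eq. intros j Hj. unfold ind. do 2 destruct excluded_middle_informative; tauto.
    + rewrite ind_F by auto. symmetry. apply sum_zero. intros; apply ind_F; tauto.
Qed.
Definition pre (s t : list bool) : Prop := exists u, t = s ++ u.

Lemma pre_len_eq c s : pre c s -> (length s <= length c)%nat -> s = c.
Proof. intros [u ->] H. rewrite length_app in H. destruct u. rewrite app_nil_r; auto. simpl in H; lia. Qed.

Lemma pre_step c s : pre c s -> s <> c -> pre (c ++ [nth (length c) s false]) s.
Proof.
  intros [u ->] H. destruct u as [|b u]. rewrite app_nil_r in H; tauto.
  rewrite app_nth2 by lia. rewrite Nat.sub_diag. simpl. exists u. rewrite <- app_assoc. auto.
Qed.

Lemma PFaux i f0 f1 (g : nat -> list bool) N : forall d c (Q : nat -> Prop),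
 (forall n, (n<=N)%nat -> Q n -> pre c (g n) /\ (length (g n) <= length c + d)%nat) ->
 (forall n m, (n <= N)%nat -> (m <= N)%nat -> Q n -> Q m -> pre (g n) (g m) -> n = m) ->
 sum_f_R0 (fun n => ind (Q n) (cylmass i f0 f1 (g n))) N <= cylmass i f0 f1 c.
Proof.
  intros d. induction d; intros c Q H1 H2;
  (destruct (classic (exists n0, (n0 <= N)%nat /\ Q n0 /\ g n0 = c)) as [[n0 [Hn0 [Qn0 Gn0]]]|Hno];
  [ apply Rle_trans with (sum_f_R0 (fun n => ind (n0 = n) (cylmass i f0 f1 c)) N);
    [ apply sum_Rle; intros n Hn; destruct (classic (Q n)) as [Qn|Qn];
      [ assert (E0 : n0 = n) by (apply H2; auto; rewrite Gn0; apply (proj1 (H1 n Hn Qn)));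
        rewrite !ind_T; auto; rewrite <- E0, Gn0; lra
      | rewrite ind_F by auto; apply ind_nonneg, cylmass_nonneg ]
    | rewrite (sum_sel (fun _ => cylmass i f0 f1 c)) by auto; lra ]
  | ]).
  - rewrite sum_zero. apply cylmass_nonneg. intros n Hn. apply ind_F. intro Qn.
    destruct (H1 n Hn Qn) as [Hp Hl]. apply Hno. exists n. repeat split; auto.
    apply pre_len_eq; auto; lia.
  - set (Qb := fun (b : bool) n => Q n /\ nth (length c) (g n) false = b).
    apply Rle_trans with (sum_f_R0 (fun n => ind (Qb false n) (cylmass i f0 f1 (g n))) N +
                          sum_f_R0 (fun n => ind (Qb true n) (cylmass i f0 f1 (g n))) N).
    + rewrite <- plus_sum. apply Req_le. apply sum_eq. intros n Hn. unfold Qb.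
      destruct (classic (Q n)).
      * destruct (nth (length c) (g n) false).
        -- rewrite (ind_F (_ /\ true = false)) by (intros [_ X]; discriminate). rewrite !ind_T; auto. ring.
        -- rewrite (ind_F (_ /\ false = true)) by (intros [_ X]; discriminate). rewrite !ind_T; auto. ring.
      * rewrite !ind_F by tauto. ring.
    + rewrite <- (cylmass_split i f0 f1 c). apply Rplus_le_compat.
      * apply IHd.
        -- intros n Hn [Qn Bn]. destruct (H1 n Hn Qn) as [Hp Hl]. split.
           ++ rewrite <- Bn. apply pre_step; auto. intro E. apply Hno. exists n; auto.
           ++ rewrite length_app; simpl; lia.
        -- intros n m Hn Hm [Qn _] [Qm _] Hp. apply H2; auto.
      * apply IHd.
        -- intros n Hn [Qn Bn]. destruct (H1 n Hn Qn) as [Hp Hl]. split.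
           ++ rewrite <- Bn. apply pre_step; auto. intro E. apply Hno. exists n; auto.
           ++ rewrite length_app; simpl; lia.
        -- intros n m Hn Hm [Qn _] [Qm _] Hp. apply H2; auto.
Qed.

Definition fin_bound i f0 f1 (F : list bool -> Prop) (B : R) := forall (g : nat -> list bool) (Q : nat -> Prop) N,
 (forall n, (n<=N)%nat -> Q n -> F (g n)) ->
 (forall n m, (n<=N)%nat -> (m<=N)%nat -> Q n -> Q m -> g n = g m -> n = m) ->
 sum_f_R0 (fun n => ind (Q n) (cylmass i f0 f1 (g n))) N <= B.

Lemma len_bound (g : nat -> list bool) N : exists D, forall n, (n <= N)%nat -> (length (g n) <= D)%nat.
Proof.
  induction N. exists (length (g 0%nat)). intros n Hn. assert (n = 0%nat) by lia. subst; lia.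
  destruct IHN as [D HD]. exists (Nat.max D (length (g (S N)))). intros n Hn.
  destruct (Nat.eq_dec n (S N)). subst; lia. specialize (HD n). lia.
Qed.

Lemma PF i f0 f1 (F : list bool -> Prop) c :
  (forall s, F s -> pre c s) -> (forall s t, F s -> F t -> pre s t -> s = t) ->
  fin_bound i f0 f1 F (cylmass i f0 f1 c).
Proof.
  intros H1 H2 g Q N HF Hinj. destruct (len_bound g N) as [D HD].
  apply (PFaux i f0 f1 g N D c Q).
  - intros n Hn Qn. split; [apply H1, HF; auto | specialize (HD n Hn); lia].
  - intros n m Hn Hm Qn Qm Hp. apply Hinj; auto; apply H2; auto.
Qed.

Fixpoint code (s : list bool) : nat :=
  match s with [] => 0%nat | b :: s' => (2 * code s' + (if b then 2 else 1))%nat end.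

Lemma code_inj s t : code s = code t -> s = t.
Proof.
  revert t; induction s as [|a s IH]; intros [|b t] H; simpl in H; auto.
  - destruct b; lia.
  - destruct a; lia.
  - destruct a, b; try lia; f_equal; apply IH; lia.
Qed.

Definition dec (n : nat) : list bool :=
  match excluded_middle_informative (exists s, code s = n) with
  | left H => proj1_sig (constructive_indefinite_description _ H)
  | right _ => [] end.

Lemma dec_spec n : (exists s, code s = n) -> code (dec n) = n.
Proof. intros H. unfold dec. destruct excluded_middle_informative; [|tauto].
  destruct constructive_indefinite_description; simpl; auto. Qed.

Lemma dec_code s : dec (code s) = s.
Proof. apply code_inj. apply dec_spec. eauto. Qed.

Fixpoint greedy i f0 f1 (L : nat) : list bool :=
  match L with O => []
  | S L' => let s := greedy i f0 f1 L' in
     s ++ [if Rle_dec (dp (sel i f0 f1 (hist f0 f1 (word_seq s) (length s)))) (/2) then true else false]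
  end.

Lemma greedy_mass i f0 f1 L : cylmass i f0 f1 (greedy i f0 f1 L) <= (/2)^L.
Proof.
  induction L. simpl. rewrite cylmass_nil; lra.
  simpl greedy. rewrite cylmass_snoc. simpl pow.
  set (q := sel i f0 f1 _).
  assert (dprob q (if Rle_dec (dp q) (/ 2) then true else false) <= /2).
  { destruct Rle_dec; unfold dprob; lra. }
  pose proof (cylmass_nonneg i f0 f1 (greedy i f0 f1 L)).
  pose proof (dprob_nonneg q (if Rle_dec (dp q) (/ 2) then true else false)).
  rewrite Rmult_comm. apply Rmult_le_compat; auto.
Qed.

Lemma geom_sum K N : sum_f_R0 (fun n => (/2)^(n+K)) N = 2 * (/2)^K - (/2)^(N+K).
Proof.
  induction N; simpl. field.
  rewrite IHN. simpl. field.
Qed.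

Lemma small_pow eps : 0 < eps -> exists K, (/2)^K < eps.
Proof.
  intros H. destruct (pow_lt_1_zero (/2)) with eps as [K HK]; auto.
  rewrite Rabs_pos_eq; lra. exists K. specialize (HK K (le_n K)).
  rewrite Rabs_pos_eq in HK; auto. apply pow_le; lra.
Qed.

Lemma family_cover i f0 f1 (A : seqw -> Prop) F B eps : 0 < eps ->
  (forall w, A w -> exists t, F (pref w t)) -> fin_bound i f0 f1 F B ->
  exists c, covers A c /\ forall N, psum i f0 f1 c N <= B + eps.
Proof.
  intros He HA HB. destruct (small_pow (eps/2)) as [K HK]; [lra|].
  set (P := fun n => F (dec n) /\ code (dec n) = n).
  exists (fun n => if excluded_middle_informative (P n) then dec n else greedy i f0 f1 (n + K)).
  split.
  - intros w Aw. destruct (HA w Aw) as [t Ft]. exists (code (pref w t)).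
    destruct excluded_middle_informative as [_|np].
    + rewrite dec_code. apply in_cyl_pref.
    + exfalso; apply np. unfold P. rewrite dec_code. auto.
  - intros N. unfold psum.
    apply Rle_trans with (sum_f_R0 (fun n => ind (P n) (cylmass i f0 f1 (dec n))) N +
       sum_f_R0 (fun n => (/2)^(n+K)) N).
    + rewrite <- plus_sum. apply sum_Rle. intros n Hn.
      pose proof (greedy_mass i f0 f1 (n+K)). pose proof (pow_le (/2) (n+K)).
      destruct excluded_middle_informative.
      * rewrite ind_T by auto. lra.
      * rewrite ind_F by auto. lra.
    + rewrite geom_sum. assert (B0 : sum_f_R0 (fun n => ind (P n) (cylmass i f0 f1 (dec n))) N <= B).
      { apply HB. intros n _ [Fn _]; auto. intros n m _ _ [_ Cn] [_ Cm] E. rewrite <- Cn, <- Cm, E; auto. }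
      pose proof (pow_le (/2) (N+K)). lra.
Qed.

Definition obound i f0 f1 (A : seqw -> Prop) (b : R) :=
  forall eps, 0 < eps -> exists c, covers A c /\ forall N, psum i f0 f1 c N <= b + eps.

Lemma obound_mono i f0 f1 (A B : seqw -> Prop) b b' : (forall w, A w -> B w) -> b <= b' ->
  obound i f0 f1 B b -> obound i f0 f1 A b'.
Proof.
  intros HAB Hb HB eps He. destruct (HB eps He) as [c [Hc Hs]]. exists c. split.
  intros w Aw; apply Hc, HAB; auto. intros N; specialize (Hs N); lra.
Qed.

Lemma obound_pz i f0 f1 A : obound i f0 f1 A 0 -> prob_zero i f0 f1 A.
Proof. intros H eps He. destruct (H eps He) as [c [Hc Hs]]. exists c; split; auto. intros N; specialize (Hs N); lra. Qed.

Lemma pz_obound i f0 f1 A : prob_zero i f0 f1 A -> obound i f0 f1 A 0.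
Proof. intros H eps He. destruct (H eps He) as [c [Hc Hs]]. exists c; split; auto. intros N; specialize (Hs N); lra. Qed.

Lemma family_obound i f0 f1 (A : seqw -> Prop) F B :
  (forall w, A w -> exists t, F (pref w t)) -> fin_bound i f0 f1 F B -> obound i f0 f1 A B.
Proof. intros H1 H2 eps He. apply (family_cover i f0 f1 A F B eps He H1 H2). Qed.

Lemma nat_bound (f : nat -> nat) N : exists D, forall n, (n <= N)%nat -> (f n <= D)%nat.
Proof.
  induction N. exists (f 0%nat). intros n Hn. assert (n = 0%nat) by lia. subst; lia.
  destruct IHN as [D HD]. exists (Nat.max D (f (S N))). intros n Hn.
  destruct (Nat.eq_dec n (S N)). subst; lia. specialize (HD n). lia.
Qed.

Lemma psum_nonneg i f0 f1 c N : 0 <= psum i f0 f1 c N.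
Proof. apply sum_nonneg. intros; apply cylmass_nonneg. Qed.

Lemma obound_union i f0 f1 (A : nat -> seqw -> Prop) (b : nat -> R) beta :
  (forall K, sum_f_R0 b K <= beta) -> (forall k, obound i f0 f1 (A k) (b k)) ->
  obound i f0 f1 (fun w => exists k, A k w) beta.
Proof.
  intros Hb HA eps He.
  assert (HC : forall k, exists c, covers (A k) c /\ forall N, psum i f0 f1 c N <= b k + eps * (/2)^(k+1)).
  { intros k. apply HA. apply Rmult_lt_0_compat; auto. apply pow_lt; lra. }
  set (C := fun k => proj1_sig (constructive_indefinite_description _ (HC k))).
  assert (HC' : forall k, covers (A k) (C k) /\ forall N, psum i f0 f1 (C k) N <= b k + eps * (/2)^(k+1)).
  { intros k. unfold C. destruct constructive_indefinite_description; auto. }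
  exists (fun n => C (fst (of_nat n)) (snd (of_nat n))). split.
  - intros w [k Akw]. destruct ((proj1 (HC' k)) w Akw) as [j Hj]. exists (to_nat (k, j)).
    rewrite cancel_of_to. simpl. auto.
  - intros N. destruct (nat_bound (fun n => fst (of_nat n)) N) as [K HK].
    destruct (nat_bound (fun n => snd (of_nat n)) N) as [M HM].
    unfold psum.
    rewrite (sum_eq _ (fun n => sum_f_R0 (fun k => ind (fst (of_nat n) = k) (cylmass i f0 f1 (C k (snd (of_nat n))))) K)).
    2:{ intros n Hn. rewrite (sum_sel (fun k => cylmass i f0 f1 (C k (snd (of_nat n))))); auto. }
    rewrite sum_swap.
    apply Rle_trans with (sum_f_R0 (fun k => b k + eps * (/2)^(k+1)) K).
    + apply sum_Rle. intros k Hk. eapply Rle_trans; [|apply (proj2 (HC' k) M)]. unfold psum.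
      apply (sum_reindex (fun j => cylmass i f0 f1 (C k j)) (fun n => fst (of_nat n) = k) (fun n => snd (of_nat n))).
      * intros; apply cylmass_nonneg.
      * intros n Hn _. apply HM; auto.
      * intros n m _ _ E1 E2 E3. rewrite <- (cancel_to_of n), <- (cancel_to_of m).
        f_equal. destruct (of_nat n), (of_nat m); simpl in *; congruence.
    + rewrite plus_sum. specialize (Hb K).
      assert (sum_f_R0 (fun k => eps * (/2)^(k+1)) K <= eps).
      { rewrite (sum_eq _ (fun k => (/2)^(k+1) * eps)) by (intros; ring).
        rewrite <- scal_sum, geom_sum.
        pose proof (pow_le (/2) (K+1)). simpl. nra. }
      lra.
Qed.

Lemma div2_2n n : Nat.div2 (2 * n) = n.
Proof. pose proof (Nat.div2_odd (2*n)). rewrite <- Nat.negb_even, Nat.even_even in H. cbn [Nat.b2n negb] in H. lia. Qed.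
Lemma div2_2n1 n : Nat.div2 (2 * n + 1) = n.
Proof. pose proof (Nat.div2_odd (2*n+1)). rewrite <- Nat.negb_even, Nat.even_odd in H. cbn [Nat.b2n negb] in H. lia. Qed.

Lemma interleave i f0 f1 (c c' : nat -> list bool) : exists c'',
  (forall n, exists m, c'' m = c n) /\ (forall n, exists m, c'' m = c' n) /\
  forall N, psum i f0 f1 c'' N <= psum i f0 f1 c N + psum i f0 f1 c' N.
Proof.
  exists (fun n => if Nat.even n then c (Nat.div2 n) else c' (Nat.div2 n)). split; [|split].
  - intros n. exists (2*n)%nat. rewrite Nat.even_even, div2_2n. auto.
  - intros n. exists (2*n+1)%nat. rewrite Nat.even_odd, div2_2n1. auto.
  - intros N. unfold psum.
    rewrite (sum_eq _ (fun n => ind (Nat.even n = true) (cylmass i f0 f1 (c (Nat.div2 n))) +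
                                ind (Nat.even n = false) (cylmass i f0 f1 (c' (Nat.div2 n))))).
    2:{ intros n _. destruct (Nat.even n).
        rewrite ind_T, ind_F by congruence; ring. rewrite ind_F, ind_T by congruence; ring. }
    rewrite plus_sum. apply Rplus_le_compat.
    + apply (sum_reindex (fun j => cylmass i f0 f1 (c j)) (fun n => Nat.even n = true) Nat.div2).
      * intros; apply cylmass_nonneg.
      * intros n Hn _. pose proof (Nat.le_div2_diag_l n). lia.
      * intros n m _ _ En Em E. rewrite (Nat.div2_odd n), (Nat.div2_odd m).
        rewrite <- !Nat.negb_even, En, Em, E. auto.
    + apply (sum_reindex (fun j => cylmass i f0 f1 (c' j)) (fun n => Nat.even n = false) Nat.div2).
      * intros; apply cylmass_nonneg.
      * intros n Hn _. pose proof (Nat.le_div2_diag_l n). lia.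
      * intros n m _ _ En Em E. rewrite (Nat.div2_odd n), (Nat.div2_odd m).
        rewrite <- !Nat.negb_even, En, Em, E. auto.
Qed.

Lemma pre_pref w t w' t' : pre (pref w t) (pref w' t') -> (t <= t')%nat /\ forall k, (k < t)%nat -> w k = w' k.
Proof.
  intros [u E]. split.
  - assert (H := f_equal (@length bool) E). rewrite length_app, !pref_length in H. lia.
  - intros k Hk.
    assert (Hl := f_equal (@length bool) E). rewrite length_app, !pref_length in Hl.
    assert (H2 := f_equal (fun l => nth k l false) E). simpl in H2. rewrite app_nth1 in H2 by (rewrite pref_length; lia).
    rewrite !pref_nth in H2 by lia. auto.
Qed.

Lemma pref_cyl c w : in_cyl c w -> pref w (length c) = c.
Proof.
  intros H. apply nth_ext with (d := false) (d' := false). rewrite pref_length; auto.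
  intros k Hk. rewrite pref_length in Hk. rewrite pref_nth by auto. apply H; auto.
Qed.

Lemma pre_cyl c w t : in_cyl c w -> (length c <= t)%nat -> pre c (pref w t).
Proof.
  intros H Ht. exists (map w (seq (length c) (t - length c))).
  rewrite <- (pref_cyl c w H) at 1. unfold pref. rewrite <- map_app. f_equal.
  replace t with (length c + (t - length c))%nat at 1 by lia. rewrite seq_app. auto.
Qed.

Lemma lratio_local j k f0 f1 w v t : (forall n, (n < t)%nat -> w n = v n) ->
  lratio j k f0 f1 w t = lratio j k f0 f1 v t.
Proof.
  intros H. unfold lratio. apply prodn_ext. intros n Hn. rewrite (fac_local k f0 f1 w v), (fac_local j f0 f1 w v); auto;
  intros; apply H; lia.
Qed.

Lemma prodn_div (a b : nat -> R) t : (forall n, (n < t)%nat -> 0 < b n) ->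
  prodn a t = prodn (fun n => a n / b n) t * prodn b t.
Proof.
  induction t; intros H; simpl. ring. rewrite IHt by (intros; apply H; lia).
  specialize (H t (Nat.lt_succ_diag_r t)). field. lra.
Qed.

Lemma mass_ratio j k f0 f1 w t : (forall n, (n < t)%nat -> 0 < fac j f0 f1 w n) ->
  cylmass k f0 f1 (pref w t) = lratio j k f0 f1 w t * cylmass j f0 f1 (pref w t).
Proof. intros H. rewrite !cylmass_pref. unfold lratio. apply prodn_div; auto. Qed.

Lemma lratio_nonneg j k f0 f1 w t : (forall n, (n < t)%nat -> 0 < fac j f0 f1 w n) -> 0 <= lratio j k f0 f1 w t.
Proof.
  unfold lratio. induction t; intros H; simpl. lra. apply Rmult_le_pos. apply IHt; intros; apply H; lia.
  pose proof (H t (Nat.lt_succ_diag_r t)). pose proof (fac_nonneg k f0 f1 w t).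
  unfold Rdiv. apply Rmult_le_pos; auto. left; apply Rinv_0_lt_compat; auto.
Qed.

Lemma minimal (P : nat -> Prop) : (exists t, P t) -> exists t, P t /\ forall t', (t' < t)%nat -> ~ P t'.
Proof.
  intros [t Ht]. revert Ht. induction t as [t IH] using (well_founded_induction Wf_nat.lt_wf). intros Ht.
  destruct (classic (exists t', (t' < t)%nat /\ P t')) as [[t' [H1 H2]]|Hn].
  - apply (IH t' H1 H2).
  - exists t. split; auto. intros t' H1 H2. apply Hn. eauto.
Qed.

Lemma pz_of_obound i f0 f1 A : (forall eps, 0 < eps -> obound i f0 f1 A eps) -> prob_zero i f0 f1 A.
Proof.
  intros H eps He. destruct (H (eps/2) ltac:(lra) (eps/2) ltac:(lra)) as [c [Hc Hs]].
  exists c; split; auto. intros N; specialize (Hs N); lra.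
Qed.

Lemma ef_core j f0 f1 : prob_zero (negb j) f0 f1 (fun w => deriv_is j (negb j) f0 f1 w 0).
Proof.
  apply pz_of_obound. intros eps He.
  set (F := fun s => exists w t, s = pref w t /\ (forall n, (n < t)%nat -> 0 < fac j f0 f1 w n) /\
      lratio j (negb j) f0 f1 w t < eps /\ forall t', (t' < t)%nat -> ~ lratio j (negb j) f0 f1 w t' < eps).
  apply (family_obound _ _ _ _ F).
  - intros w [Hpos Hcv]. destruct (minimal (fun t => lratio j (negb j) f0 f1 w t < eps)) as [t [Ht Hmin]].
    + destruct (Hcv eps He) as [N HN]. exists N. specialize (HN N (le_n N)). unfold R_dist in HN.
      rewrite Rminus_0_r in HN. pose proof (Rle_abs (lratio j (negb j) f0 f1 w N)). lra.
    + exists t. exists w, t. repeat split; auto.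
  - intros g Q N HF Hinj.
    apply Rle_trans with (sum_f_R0 (fun n => ind (Q n) (cylmass j f0 f1 (g n)) * eps) N).
    + apply sum_Rle. intros n Hn. destruct (classic (Q n)) as [Qn|Qn].
      * rewrite !ind_T by auto. destruct (HF n Hn Qn) as [w [t [E [Hp [Hl _]]]]]. rewrite E.
        rewrite (mass_ratio j (negb j)) by auto. pose proof (cylmass_nonneg j f0 f1 (pref w t)). nra.
      * rewrite !ind_F by auto. lra.
    + rewrite <- scal_sum. apply Rle_trans with (eps * cylmass j f0 f1 []);
      [|rewrite cylmass_nil; lra]. apply Rmult_le_compat_l. lra.
      apply (PF j f0 f1 F []); auto.
      * intros s _. exists s. auto.
      * intros s s' [w [t [E [_ [Hl Hm]]]]] [w' [t' [E' [_ [Hl' Hm']]]]] Hp.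
        subst s s'. destruct (pre_pref w t w' t' Hp) as [Htt Hag].
        assert (t = t').
        { destruct (Nat.eq_dec t t'); auto. exfalso. apply (Hm' t). lia.
          rewrite <- (lratio_local j (negb j) f0 f1 w w'); auto. }
        subst t'. symmetry. apply pre_len_eq; auto. rewrite !pref_length; auto.
Qed.

Lemma geom_eps eps K : 0 < eps -> sum_f_R0 (fun k => eps * (/2)^(k+1)) K <= eps.
Proof.
  intros He. rewrite (sum_eq _ (fun k => (/2)^(k+1) * eps)) by (intros; ring).
  rewrite <- scal_sum, geom_sum. pose proof (pow_le (/2) (K+1)). simpl. nra.
Qed.

Lemma Sm i f0 f1 (A : seqw -> Prop) d b : 0 < d -> 0 < b -> prob_zero (negb i) f0 f1 A ->
  obound i f0 f1 (fun w => A w /\ (forall n, 0 < fac i f0 f1 w n) /\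
     forall N, exists t, (N <= t)%nat /\ d <= Rabs (lratio i (negb i) f0 f1 w t)) b.
Proof.
  intros Hd Hb HA. set (j := negb i).
  destruct (HA (b * d) ltac:(nra)) as [c [Hc Hs]].
  set (F := fun k s => exists w t, s = pref w t /\ in_cyl (c k) w /\ (forall n, (n < t)%nat -> 0 < fac i f0 f1 w n) /\
     (length (c k) <= t)%nat /\ d <= Rabs (lratio i j f0 f1 w t) /\
     forall t', (length (c k) <= t')%nat -> (t' < t)%nat -> ~ d <= Rabs (lratio i j f0 f1 w t')).
  apply obound_mono with (B := fun w => exists k, exists t, F k (pref w t)) (b := b).
  3: apply (obound_union i f0 f1 (fun k w => exists t, F k (pref w t)) (fun k => cylmass j f0 f1 (c k) / d)).
  - intros w [Aw [Hpos Hinf]]. destruct (Hc w Aw) as [k Hk]. exists k.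
    destruct (minimal (fun t => (length (c k) <= t)%nat /\ d <= Rabs (lratio i j f0 f1 w t))) as [t [[Ht1 Ht2] Hmin]].
    + destruct (Hinf (length (c k))) as [t Ht]. exists t. auto.
    + exists t, w, t. repeat split; auto. intros t' H1 H2 H3. apply (Hmin t'); auto.
  - lra.
  - intros K. unfold Rdiv. rewrite <- scal_sum. specialize (Hs K). unfold psum in Hs.
    apply Rle_trans with (/d * (b * d)). apply Rmult_le_compat_l. left; apply Rinv_0_lt_compat; auto. auto.
    right. field. lra.
  - intros k. apply (family_obound _ _ _ _ (F k)). auto.
    intros g Q N HF Hinj.
    apply Rle_trans with (sum_f_R0 (fun n => ind (Q n) (cylmass j f0 f1 (g n)) * / d) N).
    + apply sum_Rle. intros n Hn. destruct (classic (Q n)) as [Qn|Qn].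
      * rewrite !ind_T by auto. destruct (HF n Hn Qn) as [w [t [E [_ [Hp [_ [Hl _]]]]]]]. rewrite E.
        rewrite (mass_ratio i j f0 f1 w t) by auto. rewrite Rabs_pos_eq in Hl by (apply lratio_nonneg; auto).
        pose proof (cylmass_nonneg i f0 f1 (pref w t)).
        apply (Rmult_le_reg_r d); auto. rewrite Rmult_assoc, Rinv_l by lra. nra.
      * rewrite !ind_F by auto. lra.
    + rewrite <- scal_sum. unfold Rdiv. rewrite (Rmult_comm (cylmass j f0 f1 (c k))).
      apply Rmult_le_compat_l. left; apply Rinv_0_lt_compat; auto.
      apply (PF j f0 f1 (F k) (c k)); auto.
      * intros s [w [t [E [Hcy [_ [Hl _]]]]]]. subst s. apply pre_cyl; auto.
      * intros s s' [w [t [E [_ [_ [Hl [Hd1 _]]]]]]] [w' [t' [E' [_ [_ [Hl' [_ Hm']]]]]]] Hp.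
        subst s s'. destruct (pre_pref w t w' t' Hp) as [Htt Hag].
        assert (t = t').
        { destruct (Nat.eq_dec t t'); auto. exfalso. apply (Hm' t); auto. lia.
          rewrite <- (lratio_local i j f0 f1 w w'); auto. }
        subst t'. symmetry. apply pre_len_eq; auto. rewrite !pref_length; auto.
Qed.

Lemma core i f0 f1 (A : seqw -> Prop) : prob_zero (negb i) f0 f1 A ->
  prob_zero i f0 f1 (fun w => A w /\ ~ deriv_is i (negb i) f0 f1 w 0).
Proof.
  intros HA. apply pz_of_obound. intros eps He.
  set (Z := fun w => exists n, fac i f0 f1 w n <= 0).
  set (SS := fun (m : nat) w => A w /\ (forall n, 0 < fac i f0 f1 w n) /\
     forall N, exists t, (N <= t)%nat /\ (/2)^m <= Rabs (lratio i (negb i) f0 f1 w t)).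
  set (B := fun k w => match k with O => Z w | S m => SS m w end).
  apply obound_mono with (B := fun w => exists k, B k w) (b := eps).
  3: apply (obound_union i f0 f1 B (fun k => eps * (/2)^(k+1))).
  - intros w [Aw Hnd]. destruct (classic (Z w)) as [Zw|nZ]. exists 0%nat; auto.
    assert (Hpos : forall n, 0 < fac i f0 f1 w n).
    { intros n. apply Rnot_le_lt. intro. apply nZ. exists n; auto. }
    assert (Hncv : ~ Un_cv (lratio i (negb i) f0 f1 w) 0). { intro. apply Hnd. split; auto. }
    unfold Un_cv in Hncv. apply not_all_ex_not in Hncv as [e He'].
    apply imply_to_and in He' as [He0 He1].
    destruct (small_pow e He0) as [m Hm]. exists (S m). simpl. unfold SS. repeat split; auto.
    intros N. apply not_ex_all_not with (n := N) in He1. apply not_all_ex_not in He1 as [t Ht].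
    apply imply_to_and in Ht as [Ht1 Ht2]. exists t. split; auto. unfold R_dist in Ht2.
    rewrite Rminus_0_r in Ht2. lra.
  - lra.
  - intros K. apply geom_eps; auto.
  - intros [|m].
    + apply obound_mono with (B := Z) (b := 0). auto. pose proof (pow_le (/2) (0+1)). nra.
      apply (family_obound _ _ _ _ (fun s => cylmass i f0 f1 s = 0)).
      * intros w [n Hn]. exists (S n). rewrite cylmass_pref. simpl.
        pose proof (fac_nonneg i f0 f1 w n). assert (fac i f0 f1 w n = 0) by lra. rewrite H0. ring.
      * intros g Q N HF _. right. apply sum_zero. intros n Hn. destruct (classic (Q n)).
        rewrite ind_T; auto. rewrite ind_F; auto.
    + apply Sm; auto. apply pow_lt; lra. apply Rmult_lt_0_compat; auto. apply pow_lt; lra.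
Qed.

Lemma not_both f0 f1 w : deriv_is true false f0 f1 w 0 -> deriv_is false true f0 f1 w 0 -> False.
Proof.
  intros [H1 C1] [H0 C0].
  assert (E : forall t, lratio true false f0 f1 w t * lratio false true f0 f1 w t = 1).
  { unfold lratio. induction t; simpl. ring.
    rewrite <- IHt. specialize (H1 t). specialize (H0 t). field. lra. }
  pose proof (CV_mult _ _ _ _ C1 C0) as C.
  assert (C' : Un_cv (fun t => lratio true false f0 f1 w t * lratio false true f0 f1 w t) 1).
  { intros e He. exists 0%nat. intros n _. rewrite E. unfold R_dist. rewrite Rminus_diag, Rabs_R0. auto. }
  pose proof (UL_sequence _ _ _ C C'). lra.
Qed.

Lemma pz_mono i f0 f1 (A B : seqw -> Prop) : (forall w, A w -> B w) -> prob_zero i f0 f1 B -> prob_zero i f0 f1 A.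
Proof. intros H HB. apply obound_pz. apply obound_mono with B 0; auto. lra. apply pz_obound; auto. Qed.

Lemma dtest_eq i f0 f1 w : dtest w f0 f1 = bval i -> deriv_is i (negb i) f0 f1 w 0.
Proof.
  unfold dtest. destruct i; simpl;
  repeat destruct ClassicalDescription.excluded_middle_informative; auto; intros; lra.
Qed.

Lemma dtest_neq i f0 f1 w : dtest w f0 f1 <> bval i -> ~ deriv_is i (negb i) f0 f1 w 0.
Proof.
  unfold dtest. destruct i; simpl;
  repeat destruct ClassicalDescription.excluded_middle_informative; auto; intros Hn Hd; try (apply Hn; reflexivity);
  try tauto; apply (not_both f0 f1 w); auto.
Qed.

Theorem theorem1 : reasonable dtest /\ error_free dtest.
Proof.
  split.
  - intros f0 f1 i A _ [r [Hr Hpos]] HA.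
    pose proof (core i f0 f1 A HA) as Hc.
    exists (r/2). split. lra. intros c Hcov.
    destruct (Hc (r/4) ltac:(lra)) as [c' [Hcov' Hs']].
    destruct (interleave i f0 f1 c c') as [c'' [I1 [I2 Hs'']]].
    destruct (Hpos c'') as [N HN].
    + intros w Aw. destruct (classic (dtest w f0 f1 = bval i)) as [E|E].
      * destruct (Hcov w (conj Aw E)) as [n Hn]. destruct (I1 n) as [m Hm]. exists m. rewrite Hm; auto.
      * destruct (Hcov' w (conj Aw (dtest_neq i f0 f1 w E))) as [n Hn]. destruct (I2 n) as [m Hm]. exists m. rewrite Hm; auto.
    + exists N. specialize (Hs'' N). specialize (Hs' N). lra.
  - intros f0 f1 i. apply pz_mono with (fun w => deriv_is i (negb i) f0 f1 w 0).
    apply dtest_eq. apply ef_core.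
Qed.
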